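(* Let $N\ge 2$ and let $\mathbf{g}=\mathbf{1}_{[0,W-1]}\in\mathbb{R}^N$ be the rectangular window ($\mathbf{g}[n]=1$ for $0\le n\le W-1$, $\mathbf{g}[n]=0$ for $W\le n\le N-1$). Suppose (1) $N/2<W<N$, and (2) $N$ is coprime to each of the integers $2W-N,2W-N+1,\dots,W$ (which holds in particular if $N$ is prime). Then for every $\mathbf{x}\in\mathbb{C}^N$, the LS Algorithm described in the context, applied to the noise-free STFT magnitude $|\mathbf{X}[m,k]|^2$ of $\mathbf{x}$ with this window and $L=1$, outputs $e^{i\phi}\mathbf{x}$ for some $\phi\in\mathbb{R}$.
   Context: Signals and windows are indexed by $\{0,\dots,N-1\}$ and extended $N$-periodically. The STFT of $\mathbf{x}\in\mathbb{C}^N$ with window $\mathbf{g}$ and step $L=1$ is $\mathbf{X}[m,k]=\sum_{n=0}^{N-1}\mathbf{x}[n]\mathbf{g}[m-n]e^{-2\pi i kn/N}$ for $m,k=0,\dots,N-1$. The DFT of $\mathbf{v}\in\mathbb{C}^N$ is $(\mathbf{F}\mathbf{v})[k]=\sum_n \mathbf{v}[n]e^{-2\pi i kn/N}$. For $\mathbf{M}\in\mathbb{C}^{N\times N}$, $\mathrm{diag}(\mathbf{M},\ell)$ is the vector $(\mathbf{M}_{i,(i+\ell)\bmod N})_{i=0}^{N-1}$. LS Algorithm: given $\mathbf{Y}[m,k]$, (1) compute $\mathbf{Z}[m,\ell]=\sum_{k=0}^{N-1}\mathbf{Y}[m,k]e^{-2\pi i k\ell/N}$ and $\mathbf{z}_\ell=(\mathbf{Z}[m,\ell])_{m}$;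 (2) for each $\ell=0,\dots,N-1$ compute $\mathbf{x}_\ell=\frac1N\mathbf{G}_\ell^{-1}\mathbf{z}_\ell$, where $\mathbf{G}_\ell$ is the $N\times N$ circulant matrix with first column $(\mathbf{g}[m]\overline{\mathbf{g}[(m-\ell)\bmod N]})_{m=0}^{N-1}$ (computed via the DFT diagonalization of $\mathbf{G}_\ell$); (3) form $\mathbf{X}$ with $\mathrm{diag}(\mathbf{X},\ell)=\mathbf{x}_\ell$ for all $\ell$; (4) output $\sqrt{\lambda_{\max}}u_{\max}$, with $\lambda_{\max}$ the largest eigenvalue of $\mathbf{X}$ and $u_{\max}$ an associated unit eigenvector. *)

(* Defs.v *)
From HB Require Import structures.
From mathcomp Require Import all_boot all_order all_algebra.
From mathcomp Require Import complex.
From mathcomp Require Import reals trigo.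

Set Implicit Arguments.
Unset Strict Implicit.
Unset Printing Implicit Defensive.

Import Order.TTheory GRing.Theory Num.Theory.
Local Open Scope ring_scope.
Local Open Scope complex_scope.

Section STFT.
Variable R : realType.
Notation C := (R[i]).

Definition expi (t : R) : C := (cos t +i* sin t).

Lemma ord_gt0 (N : nat) (i : 'I_N) : (0 < N)%N.
Proof. exact: leq_ltn_trans (leq0n i) (ltn_ord i). Qed.

Definition ordm (N : nat) (i : 'I_N) (k : nat) : 'I_N :=
  Ordinal (ltn_pmod k (ord_gt0 i)).

Definition ord_sub (N : nat) (i j : 'I_N) : 'I_N := ordm i (i + (N - j))%N.
Definition ord_add (N : nat) (i j : 'I_N) : 'I_N := ordm i (i + j)%N.

Definition rect_window (N W : nat) : 'I_N -> C :=
  fun n => if (n < W)%N then 1 else 0.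

Definition dft_kernel (N k n : nat) : C :=
  expi (- (2 * pi * (k * n)%N%:R / N%:R)).

(* STFT with step L = 1: X[m,k] = sum_n x[n] g[m-n] e^{-2 pi i k n / N} *)
Definition stft (N : nat) (g x : 'I_N -> C) : 'M[C]_N :=
  \matrix_(m < N, k < N) \sum_(n < N) x n * g (ord_sub m n) * dft_kernel N k n.

Definition stft_mag2 (N : nat) (g x : 'I_N -> C) : 'M[C]_N :=
  \matrix_(m < N, k < N) (`|stft g x m k| ^+ 2).

Definition LS_Z (N : nat) (Y : 'M[C]_N) : 'M[C]_N :=
  \matrix_(m < N, l < N) \sum_(k < N) Y m k * dft_kernel N k l.

Definition LS_G (N : nat) (g : 'I_N -> C) (l : 'I_N) : 'M[C]_N :=
  \matrix_(m < N, n < N)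
     (let d := ord_sub m n in g d * (g (ord_sub d l))^*).

Definition LS_xl (N : nat) (g : 'I_N -> C) (Y : 'M[C]_N) (l : 'I_N) : 'cV[C]_N :=
  (N%:R)^-1 *: (invmx (LS_G g l) *m col l (LS_Z Y)).

(* Step (3): X with diag(X, l) = x_l, i.e. X_{i,(i+l) mod N} = x_l[i] *)
Definition LS_X (N : nat) (g : 'I_N -> C) (Y : 'M[C]_N) : 'M[C]_N :=
  \matrix_(i < N, j < N) LS_xl g Y (ord_sub j i) i ord0.

Definition largest_eigenvalue (N : nat) (M : 'M[C]_N) (lam : C) : Prop :=
  eigenvalue M lam /\ (forall mu, eigenvalue M mu -> mu <= lam).

Definition unit_eigenvector (N : nat) (M : 'M[C]_N) (lam : C) (u : 'cV[C]_N) : Prop :=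
  M *m u = lam *: u /\ \sum_(i < N) `|u i ord0| ^+ 2 = 1.

End STFT.

(* Main.v *)
Require Import Defs.
From HB Require Import structures.
From mathcomp Require Import all_boot all_order all_algebra.
From mathcomp Require Import complex.
From mathcomp Require Import reals trigo.
From mathcomp Require Import ring lra zify.
Import Order.TTheory GRing.Theory Num.Theory.
Local Open Scope ring_scope.

Section A.
Variable R : realType.
Notation C := (R[i]).

Lemma expiD (a b : R) : expi (a + b) = expi a * expi b.
Proof.
rewrite /expi cosD sinD. apply/eqP; rewrite eq_complex /=. apply/andP; split; apply/eqP; ring.
Qed.

Lemma expi0 : expi (0:R) = 1.
Proof. by rewrite /expi cos0 sin0. Qed.

Lemma expiMn (t : R) m : expi (t *+ m) = expi t ^+ m.
Proof. elim: m => [|m IH]; first by rewrite mulr0n expr0 expi0.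
by rewrite mulrS expiD IH exprS. Qed.

Lemma expi_conj (t : R) : expi t * (expi t)^* = 1.
Proof.
rewrite /expi /=. apply/eqP; rewrite eq_complex /=. apply/andP; split; apply/eqP.
  by rewrite -(cos2Dsin2 t); ring.
ring.
Qed.

Variable n : nat.
Local Notation N := n.+2.

Definition om : C := expi (- (2 * pi / N%:R)).

Lemma NR_neq0 : (N%:R : R) != 0.
Proof. by rewrite pnatr_eq0. Qed.

Lemma dftE k m : dft_kernel R N k m = om ^+ (k * m).
Proof.
rewrite /dft_kernel /om -expiMn; congr expi.
rewrite -mulr_natr; ring.
Qed.

Lemma omN : om ^+ N = 1.
Proof.
rewrite /om -expiMn.
have -> : (- (2 * pi / N%:R)) *+ N = - (2 * pi) :> R.
  by rewrite -(mulr_natr (- (2 * pi / N%:R)) N) mulNr mulfVK ?NR_neq0.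
by rewrite /expi cosN sinN mulr_natl cos2pi sin2pi oppr0.
Qed.

Lemma omk_neq1 k : (0 < k < N)%N -> om ^+ k != 1.
Proof.
move=> /andP[k0 kN].
rewrite /om -expiMn /expi; apply/negP; rewrite eq_complex /= => /andP[/eqP H _].
pose t : R := pi * k%:R / N%:R.
have ht : (- (2 * pi / N%:R)) *+ k = - (t + t) by rewrite /t -(mulr_natr _ k); ring.
move: H; rewrite ht cosN cosD.
have st : 0 < sin t.
  apply: sin_gt0_pi; apply/andP; split.
    by rewrite /t divr_gt0 ?mulr_gt0 ?pi_gt0 ?ltr0n.
  rewrite /t ltr_pdivrMr ?ltr0n // ltr_pM2l ?pi_gt0 // ltr_nat //.
have := cos2Dsin2 t. nra.
Qed.

Lemma om_prim : N.-primitive_root om.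
Proof.
have [m pm mN] := prim_order_exists (isT : (0 < N)%N) omN.
have m0 := prim_order_gt0 pm.
have mle : (m <= N)%N by apply: dvdn_leq.
case: (ltnP m N) => hm.
  by by move: (omk_neq1 m); rewrite m0 hm prim_expr_order // eqxx; move/(_ isT).
by have <- : m = N by apply/eqP; rewrite eqn_leq mle hm.
Qed.

Lemma om_dvd j : (om ^+ j == 1) = (N %| j)%N.
Proof. by rewrite (prim_order_dvd om_prim). Qed.

Lemma om_conj : om^* = om ^+ N.-1.
Proof.
have h := expi_conj (- (2 * pi / N%:R)). rewrite -/om in h.
have : om * om ^+ N.-1 = 1 by rewrite -exprS omN.
rewrite -h => /mulfI -> //.
by apply/eqP => o0; move: h; rewrite o0 mul0r => /eqP; rewrite eq_sym oner_eq0.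
Qed.

Lemma sum_om (a : nat) : \sum_(k < N) om ^+ (k * a) = if (N %| a)%N then N%:R else 0.
Proof.
under eq_bigr do rewrite mulnC exprM.
case: ifP => h.
  have -> : om ^+ a = 1 by apply/eqP; rewrite om_dvd.
  by rewrite (eq_bigr (fun _ => 1)) ?sumr_const ?card_ord // => i _; rewrite expr1n.
have h1 : om ^+ a - 1 != 0 by rewrite subr_eq0 om_dvd h.
apply: (mulfI h1); rewrite mulr0 -subrX1 -exprM mulnC exprM omN expr1n subrr //.
Qed.
End A.

Section B.
Variable R : realType.
Notation C := (R[i]).
Variable n : nat.
Local Notation N := n.+2.
Local Notation om := (om R n).

Lemma ord_subE (i j : 'I_N) : ord_sub i j = (i - j)%R.
Proof.
apply: val_inj => /=. case: j => [[|j] Hj] /=.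
  by rewrite subn0 modnDr modnn addn0.
by rewrite (@modn_small (N - j.+1)) //; lia.
Qed.

Lemma ord_addE (i j : 'I_N) : ord_add i j = (i + j)%R.
Proof. by apply: val_inj. Qed.

Lemma valZ (a : nat) : nat_of_ord (a%:R : 'I_N) = (a %% N)%N.
Proof. by rewrite Zp_nat. Qed.

Lemma dvdZ (a : nat) : (N %| a)%N = ((a%:R : 'I_N) == 0).
Proof. by rewrite /dvdn -valZ; apply/eqP/eqP => [h|->//]; apply: val_inj. Qed.

Lemma om_conjX a : (om ^+ a)^* = om ^+ (N.-1 * a).
Proof. by rewrite exprM -om_conj rmorphXn. Qed.

Lemma conjM (K : numClosedFieldType) (a b : K) : (a * b)^* = a^* * b^*.
Proof. exact: rmorphM. Qed.

Lemma conj_sum (K : numClosedFieldType) (I : Type) (r : seq I) (F : I -> K) : (\sum_(i <- r) F i)^* = \sum_(i <- r) (F i)^*.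
Proof. exact: rmorph_sum. Qed.

Lemma normCK' (z : C) : `|z| ^+ 2 = z * z^*.
Proof. exact: normCK. Qed.

Lemma natNZ : ((n.+1)%:R : 'I_N) = -1.
Proof.
apply: (addrI 1); rewrite addrN nat1r; apply: val_inj; by rewrite /= Zp_nat /= modnDm add1n modnn. Qed.

Lemma expZ (j j' l : 'I_N) : ((j + N.-1 * j' + l)%N%:R : 'I_N) = j - j' + l.
Proof. set a := (N.-1 * j')%N; rewrite !natrD /a natrM.
have -> : (j'%:R + n%:R * j'%:R : 'I_N) = (n.+1)%:R * j'%:R by rewrite -(natr1 n) mulrDl mul1r addrC.
by rewrite natNZ !natr_Zp mulN1r. Qed.

Definition yv (x : 'I_N -> C) (l : 'I_N) : 'cV[C]_N := \col_i (x i * (x (i + l)%R)^*).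

Lemma LS_Z_col (g x : 'I_N -> C) (l : 'I_N) :
  col l (LS_Z (stft_mag2 g x)) = N%:R *: (LS_G g l *m yv x l).
Proof.
apply/colP => m; rewrite !mxE.
under eq_bigr => k _ do rewrite !mxE normCK' conj_sum mulr_suml big_distrl /=.
under eq_bigr => k _ do under eq_bigr => j _ do rewrite mulr_sumr big_distrl /=.
rewrite exchange_big /=.
under eq_bigr => j _ do rewrite exchange_big /=.
rewrite big_distrr /=.
apply: eq_bigr => j _.
have E : forall j' : 'I_N, \sum_(k < N) x j * g (ord_sub m j) * dft_kernel R N k j *
   (x j' * g (ord_sub m j') * dft_kernel R N k j')^* * dft_kernel R N k l
   = x j * g (ord_sub m j) * (x j' * g (ord_sub m j'))^* *
      \sum_(k < N) om ^+ (k * (j + N.-1 * j' + l)).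
  move=> j'; rewrite big_distrr /=; apply: eq_bigr => k _.
  rewrite !dftE conjM om_conjX.
  have -> : (k * (j + N.-1 * j' + l) = k * j + N.-1 * (k * j') + k * l)%N by ring.
  rewrite !exprD; ring.
under eq_bigr => j' _ do rewrite E sum_om dvdZ expZ.
rewrite (bigD1 (j + l)%R) //= big1 => [|j' hj'].
  have -> : j - (j + l) + l = 0 by ring.
  rewrite eqxx !mxE addr0 /= !ord_subE.
  have -> : m - (j + l) = m - j - l by ring.
  rewrite conjM; ring.
rewrite (_ : (j - j' + l == 0) = false) ?mulr0 //.
apply/negbTE; apply: contra hj' => /eqP h; apply/eqP.
have -> : j + l = (j - j' + l) + j' by ring.
by rewrite h add0r.
Qed.
End B.

Section E.
Variable R : realType.
Notation C := (R[i]).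

Lemma expi_surj (z : C) : z * z^* = 1 -> exists phi : R, expi phi = z.
Proof.
case: z => a b. rewrite /=. move/eqP; rewrite eq_complex /= => /andP[/eqP h _].
have hab : a ^+ 2 + b ^+ 2 = 1 by rewrite -h; ring.
have ha : -1 <= a <= 1 by apply/andP; split; nra.
have hs : Num.sqrt (1 - a ^+ 2) = `|b|.
  by rewrite -hab (addrC (a ^+ 2)) addrK sqrtr_sqr.
case: (lerP 0 b) => hb.
  exists (acos a); rewrite /expi acosK ?sin_acos // ?hs ?ger0_norm //.
exists (- acos a); rewrite /expi cosN sinN acosK ?sin_acos // ?hs ?ltr0_norm ?opprK //.
Qed.
End E.

Section F.
Variable R : realType.
Notation C := (R[i]).
Variable N : nat.
Variable x : 'I_N -> C.
Definition XX : 'M[C]_N := \matrix_(i, j) (x i * (x j)^*).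

Lemma conjM2 (K : numClosedFieldType) (a b : K) : (a * b)^* = a^* * b^*.
Proof. exact: rmorphM. Qed.

Lemma normCK2 (z : C) : `|z| ^+ 2 = z * z^*.
Proof. exact: normCK. Qed.

Lemma eig_part (lam : C) (u : 'cV[C]_N) :
  largest_eigenvalue XX lam -> unit_eigenvector XX lam u ->
  exists phi : R, forall k : 'I_N, sqrtC lam * u k ord0 = expi phi * x k.
Proof.
move=> [_ Hmax] [Heig Hu].
set c := \sum_i (x i)^* * u i ord0.
have Hi : forall i, x i * c = lam * u i ord0.
  move=> i; move/matrixP: Heig => /(_ i ord0); rewrite !mxE => <-.
  rewrite /c big_distrr /=; apply: eq_bigr => j _; rewrite !mxE; ring.
have u0 : exists i, u i ord0 != 0.
  apply/existsP; apply: contraT; rewrite negb_exists => /forallP h.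
  move: Hu; rewrite big1 => [/eqP|i _]; first by rewrite eq_sym oner_eq0.
  by have := h i; rewrite negbK => /eqP ->; rewrite normr0 expr0n.
case: (boolP [exists i, x i != 0]) => [/existsP [i0 xi0]|].
  set s := \sum_i (x i) * (x i)^*.
  have s_gt0 : 0 < s.
    rewrite /s (bigD1 i0) //= -normCK2; apply: ltr_wpDr.
      by apply: sumr_ge0 => i _; rewrite -normCK2 exprn_ge0.
    by rewrite exprn_gt0 // normr_gt0.
  have s_le : s <= lam.
    apply: Hmax; apply/eigenvalueP; exists (\row_j (x j)^*).
      apply/rowP => j; rewrite !mxE /s big_distrl /=; apply: eq_bigr => i _.
      by rewrite !mxE; ring.
    apply/eqP => /rowP /(_ i0); rewrite !mxE => /eqP; rewrite conjC_eq0.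
    exact/negP.
  have lam_gt0 : 0 < lam by apply: lt_le_trans s_le.
  have lam0 : lam != 0 by rewrite gt_eqF.
  have Hc : c * s = lam * c.
    rewrite {1}/s [in RHS]/c !big_distrr /=; apply: eq_bigr => i _.
    by rewrite [RHS]mulrCA -Hi; ring.
  have c0 : c != 0.
    apply/eqP => c0; case: u0 => i; apply/negP; rewrite negbK.
    by have := Hi i; rewrite c0 mulr0 => /esym/eqP; rewrite mulf_eq0 (negbTE lam0).
  have lams : lam = s by apply: (mulIf c0); rewrite -Hc mulrC.
  have ui : forall i, u i ord0 = x i * (c / lam).
    by move=> i; rewrite mulrA Hi mulrC mulrA mulVf // mul1r.
  have Hn : lam * (c / lam) * (c / lam)^* = 1.
    rewrite -Hu; under eq_bigr => i _ do rewrite ui normCK2 conjM2.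
    rewrite {1}lams /s !big_distrl /=; apply: eq_bigr => i _; ring.
  have [phi Hphi] : exists phi : R, expi phi = sqrtC lam * (c / lam).
    apply: expi_surj; rewrite conjM2.
    have -> : (sqrtC lam)^* = sqrtC lam.
      by apply/CrealP; rewrite realE sqrtC_ge0 ltW.
    by rewrite mulrACA -expr2 sqrtCK mulrA.
  by exists phi => k; rewrite Hphi ui; ring.
rewrite negb_exists => /forallP hx.
have lam00 : lam = 0.
  case: u0 => i ui; have := Hi i; have := hx i; rewrite negbK => /eqP ->.
  by rewrite mul0r => /esym/eqP; rewrite mulf_eq0 (negbTE ui) orbF => /eqP.
exists 0 => k; have := hx k; rewrite negbK => /eqP ->.
by rewrite lam00 sqrtC0 mul0r mulr0.
Qed.
End F.

Section G.
Variable R : realType.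
Notation C := (R[i]).
Variable n : nat.
Local Notation N := n.+2.
Local Notation om := (om R n).

Lemma unit_of_inj (A : 'M[C]_N) :
  (forall v : 'cV[C]_N, A *m v = 0 -> v = 0) -> A \in unitmx.
Proof.
move=> H; rewrite -unitmx_tr -row_free_unit -kermx_eq0; apply/eqP.
apply/row_matrixP => i; rewrite row0.
have h : row i (kermx A^T) *m A^T = 0 by apply/sub_kermxP; exact: row_sub.
have h3 : A *m (row i (kermx A^T))^T = 0 by rewrite -[A]trmxK -trmx_mul trmxK h trmx0.
have h2 := H _ h3.
by rewrite -[row _ _]trmxK h2 trmx0.
Qed.

Lemma omZ k (a b : 'I_N) : om ^+ (k * (a + b)%R) = om ^+ (k * a) * om ^+ (k * b).
Proof.
rewrite !exprM -exprD /=; apply: expr_mod.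
by rewrite -exprM mulnC exprM omN expr1n.
Qed.

Definition chat (c : 'I_N -> C) (k : nat) := \sum_(a < N) c a * om ^+ (k * a).

Lemma circ_unit (c : 'I_N -> C) :
  (forall k : 'I_N, chat c k != 0) -> (\matrix_(m, j) c (m - j)%R) \in unitmx.
Proof.
move=> Hc; apply: unit_of_inj => v Hv.
have vh : forall k : 'I_N, \sum_(j < N) v j ord0 * om ^+ (k * j) = 0.
  move=> k; apply: (mulfI (Hc k)); rewrite mulr0.
  have -> : chat c k * (\sum_(j < N) v j ord0 * om ^+ (k * j)) =
     \sum_(m < N) om ^+ (k * m) * (\sum_(j < N) c (m - j)%R * v j ord0).
    under [RHS]eq_bigr do rewrite big_distrr /=.
    rewrite exchange_big /= big_distrr /=; apply: eq_bigr => j _.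
    rewrite /chat big_distrl [RHS](reindex_inj (addIr j)).
    apply: eq_bigr => a _.
    rewrite addrK omZ /=; ring.
  rewrite big1 // => m _; move/matrixP: (Hv) => /(_ m ord0); rewrite !mxE; under eq_bigr do rewrite mxE; move=> ->; by rewrite mulr0.
apply/colP => j; rewrite mxE.
have NC : (N%:R : C) != 0 by rewrite pnatr_eq0.
apply: (mulfI NC); rewrite mulr0 mulrC.
transitivity (\sum_(i < N) v i ord0 * (if ((i + N.-1 * j)%N%:R : 'I_N) == 0 then N%:R else 0)).
  rewrite (bigD1 j) //= big1 => [|i hi].
    by rewrite addr0 -[((j + _)%N%:R)]addr0 -(natr_Zp 0) -natrD expZ subrr add0r eqxx.
  by rewrite -[((i + _)%N%:R)]addr0 -(natr_Zp 0) -natrD expZ addr0 subr_eq0 (negbTE hi) mulr0.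
transitivity (\sum_(k < N) (\sum_(i < N) v i ord0 * om ^+ (k * i)) * om ^+ (k * (N.-1 * j))).
  under [RHS]eq_bigr do rewrite big_distrl /=.
  rewrite [RHS]exchange_big /=; apply: eq_bigr => i _.
  rewrite -dvdZ -sum_om big_distrr /=; apply: eq_bigr => k _.
  by rewrite -mulrA -exprD -mulnDr.
by rewrite big1 // => k _; rewrite vh mul0r.
Qed.
End G.

Section H.
Variable R : realType.
Notation C := (R[i]).

Lemma geom_nat (z : C) a b : (a <= b)%N ->
  (z - 1) * \sum_(a <= d < b) z ^+ d = z ^+ b - z ^+ a.
Proof.
elim: b => [|b IH] hab.
  have -> : a = 0%N by lia.
  by rewrite big_geq // mulr0 subrr.
case: (leqP a b) => h.
  by rewrite big_nat_recr //= mulrDr IH // exprS; ring.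
have -> : a = b.+1 by lia.
by rewrite big_geq // mulr0 subrr.
Qed.

Lemma sum_pieces (z : C) (P : nat -> bool) h1 lo W N : (h1 <= lo)%N -> (lo <= W)%N -> (W <= N)%N ->
  (forall d, (d < N)%N -> P d = (d < h1)%N || (lo <= d < W)%N) ->
  (z - 1) * \sum_(0 <= d < N) (if P d then z ^+ d else 0) = z ^+ h1 - 1 + z ^+ W - z ^+ lo.
Proof.
move=> h1lo loW WN HP.
rewrite (big_cat_nat (n := h1)) //= ?(leq_trans h1lo) ?(leq_trans loW) //.
rewrite (big_cat_nat (n := lo) (m := h1)) //= ?(leq_trans loW) //.
rewrite (big_cat_nat (n := W) (m := lo)) //=.
rewrite (eq_big_nat _ _ (F2 := fun d => z ^+ d)); last first.
  move=> d /andP[_ hd]; rewrite HP ?hd //; lia.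
rewrite [\sum_(h1 <= i < lo) _](eq_big_nat _ _ (F2 := fun d => 0)); last first.
  move=> d /andP[h1d hd]; rewrite HP; last by lia.
  have /negbTE -> // : ~~ ((d < h1) || (lo <= d < W))%N by apply/negP => /orP [?|/andP [? ?]]; lia.
rewrite [\sum_(lo <= i < W) _](eq_big_nat _ _ (F2 := fun d => z ^+ d)); last first.
  move=> d /andP[h1d hd]; rewrite HP; last by lia.
  have -> // : ((d < h1) || (lo <= d < W))%N by apply/orP; right; apply/andP; split; lia.
rewrite [\sum_(W <= i < N) _](eq_big_nat _ _ (F2 := fun d => 0)); last first.
  move=> d /andP[h1d hd]; rewrite HP; last by lia.
  have /negbTE -> // : ~~ ((d < h1) || (lo <= d < W))%N by apply/negP => /orP [?|/andP [? ?]]; lia.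
rewrite [\sum_(h1 <= i < lo) _]big1_seq // [\sum_(W <= i < N) _]big1_seq //.
rewrite add0r addr0 mulrDr !geom_nat // expr0; ring.
Qed.
End H.

Section I.
Variable R : realType.
Notation C := (R[i]).
Variables n W : nat.
Local Notation N := n.+2.
Local Notation om := (om R n).
Hypotheses (hW1 : (N < W + W)%N) (hW2 : (W < N)%N)
  (hcop : forall j, (W + W - N <= j)%N -> (j <= W)%N -> coprime N j).

Definition cl (l d : 'I_N) : C := @rect_window R N W d * (@rect_window R N W (ord_sub d l))^*.

Lemma cl_val l d : cl l d = if (d < W)%N && ((d + (N - l)) %% N < W)%N then 1 else 0.
Proof.
rewrite /cl /rect_window /=.
case: (d < W)%N; case: ((d + (N - l)) %% N < W)%N => /=;
  by rewrite ?conjC1 ?conjC0 ?mulr1 ?mulr0 ?mul0r.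
Qed.

Lemma modv d l : (d < N)%N -> (l < N)%N ->
  ((d + (N - l)) %% N = if (l <= d)%N then d - l else d + (N - l))%N.
Proof.
move=> dN lN; case: ifP => h.
  have -> : (d + (N - l) = (d - l) + N)%N by lia.
  by rewrite modnDr modn_small //; lia.
by rewrite modn_small //; lia.
Qed.

Lemma ncop2 : coprime N 2.
Proof.
have [e [he1 he2 he3]] : exists e, [/\ (W + W - N <= e)%N, (e <= W)%N & (2 %| e)%N].
  case: (boolP (odd (W + W - N))) => ho.
    exists (W + W - N)%N.+1; split; [lia|lia|].
    by rewrite dvdn2 /= ho.
  by exists (W + W - N)%N; split; [lia|lia|rewrite dvdn2].
exact: (coprime_dvdr he3 (hcop e he1 he2)).
Qed.

Lemma zpow_neq1 (k : 'I_N) j : (0 < k)%N -> coprime N j -> (om ^+ k) ^+ j != 1.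
Proof.
move=> k0 cj; rewrite -exprM om_dvd Gauss_dvdl //.
apply/negP => /(dvdn_leq k0); rewrite leqNgt ltn_ord.
done.
Qed.

Lemma chat_cl (l k : 'I_N) : @chat R n (cl l) k != 0.
Proof.
have lN := ltn_ord l.
case: (posnP k) => [k0|kpos].
  rewrite /chat k0; under eq_bigr do rewrite mul0n expr0 mulr1.
  pose a0 : 'I_N := inord (if (l < W)%N then W.-1 else 0).
  have a0v : nat_of_ord a0 = (if (l < W)%N then W.-1 else 0)%N.
    by rewrite inordK //; case: ifP => _; lia.
  have ca0 : cl l a0 = 1.
    rewrite cl_val modv ?a0v; [|by case: ifP => _; lia|by []].
    case: (ltnP l W) => hl; rewrite ?hl ?(ltnNge l W) ?hl /=; rewrite ifT //;
      apply/andP; split; try lia; case: ifP => ?; lia.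
  apply: lt0r_neq0; rewrite (bigD1 a0) //= ca0.
  apply: ltr_pwDl => //; apply: sumr_ge0 => i _; rewrite cl_val; case: ifP => // _.
pose z := om ^+ k.
have z1 : z - 1 != 0 by rewrite subr_eq0 -(expr1 z) zpow_neq1 // coprimen1.
have Hchat : @chat R n (cl l) k =
   \sum_(0 <= d < N) (if (d < W)%N && ((d + (N - l)) %% N < W)%N then z ^+ d else 0).
  rewrite /chat big_mkord; apply: eq_bigr => d _; rewrite cl_val /z -exprM.
  by case: ifP; rewrite ?mul1r ?mul0r.
rewrite Hchat; apply/negP => /eqP H0.
have H1 : forall h1 lo, (h1 <= lo)%N -> (lo <= W)%N ->
   (forall d, (d < N)%N -> ((d < W)%N && ((d + (N - l)) %% N < W)%N) = (d < h1)%N || (lo <= d < W)%N) ->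
   z ^+ h1 - 1 + z ^+ W - z ^+ lo = 0.
  move=> h1 lo a b c; by rewrite -(@sum_pieces R z _ h1 lo W N a b (ltnW hW2) c) H0 mulr0.
have zN : z ^+ N = 1 by rewrite /z -exprM mulnC exprM omN expr1n.
have zN0 : z != 0.
  by apply/eqP => z0; move: zN; rewrite z0 expr0n /= => /eqP; rewrite eq_sym oner_eq0.
have cop : forall j, (W + W - N <= j)%N -> (j <= W)%N -> z ^+ j != 1.
  by move=> j a b; apply: zpow_neq1 => //; apply: hcop.
have chr : forall h1 lo, (forall d, (d < N)%N -> (l <= d)%N -> ((d < W) && (d - l < W))%N = (d < h1)%N || (lo <= d < W)%N) ->
   (forall d, (d < N)%N -> (d < l)%N -> ((d < W) && (d + (N - l) < W))%N = (d < h1)%N || (lo <= d < W)%N) ->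
   (forall d, (d < N)%N -> ((d < W)%N && ((d + (N - l)) %% N < W)%N) = (d < h1)%N || (lo <= d < W)%N).
  move=> h1 lo Ha Hb d dN; rewrite modv //; case: ifP => hd; [exact: Ha|apply: Hb => //; lia].
case: (leqP l (N - W)) => hA.
  have hlW : (l <= W)%N by lia.
  have hc := chr 0%N l ltac:(move=> d dN hd; lia) ltac:(move=> d dN hd; lia).
  have := H1 0%N l (leq0n _) hlW hc; rewrite expr0 subrr add0r.
  have -> : z ^+ W = z ^+ l * z ^+ (W - l) by rewrite -exprD; congr (_ ^+ _); lia.
  move=> /eqP; rewrite -{2}(mulr1 (z ^+ l)) -mulrBr mulf_eq0 expf_eq0 (negbTE zN0) andbF /=.
  by rewrite subr_eq0; apply/negP; apply: cop; lia.
case: (leqP W l) => hB.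
  have hc := chr (l + W - N)%N W ltac:(move=> d dN hd; lia) ltac:(move=> d dN hd; lia).
  have := H1 (l + W - N)%N W ltac:(lia) (leqnn _) hc.
  by rewrite addrK => /eqP; rewrite subr_eq0; apply/negP; apply: cop; lia.
have hc := chr (l + W - N)%N l ltac:(move=> d dN hd; lia) ltac:(move=> d dN hd; lia).
have := H1 (l + W - N)%N l ltac:(lia) (ltnW hB) hc.
have -> : z ^+ (l + W - N)%N = z ^+ l * z ^+ W.
  by rewrite -exprD -(mulr1 (z ^+ (l + W - N)%N)) -zN -exprD; congr (_ ^+ _); lia.
have -> : z ^+ l * z ^+ W - 1 + z ^+ W - z ^+ l = (z ^+ l + 1) * (z ^+ W - 1) by ring.
move=> /eqP; rewrite mulf_eq0 subr_eq0 (negbTE (cop _ _ _)); [|lia|lia].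
rewrite orbF addr_eq0 => /eqP hm.
have h2 : z ^+ (l * 2) = 1 by rewrite exprM hm expr2 mulrNN mulr1.
have h3 : z ^+ l = 1.
  apply/eqP; move: h2 => /eqP; rewrite /z -!exprM !om_dvd mulnA Gauss_dvdl //; exact: ncop2.
move: hm; rewrite h3 => /eqP; rewrite -subr_eq0 opprK -(natrD _ 1 1) pnatr_eq0 //.
Qed.
End I.

Section J.
Variable R : realType.
Notation C := (R[i]).
Variable n : nat.
Local Notation N := n.+2.

Lemma LS_X_eq (g x : 'I_N -> C) : (forall l, LS_G g l \in unitmx) ->
  LS_X g (stft_mag2 g x) = @XX R N x.
Proof.
move=> Hu; apply/matrixP => i j; rewrite [LHS]mxE /LS_xl LS_Z_col -scalemxAr mulKmx //.
rewrite scalerA mulVf ?pnatr_eq0 // scale1r !mxE ord_subE.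
by have -> : i + (j - i) = j by ring.
Qed.

Lemma LS_G_rect W (l : 'I_N) : LS_G (@rect_window R N W) l = \matrix_(m, j) @cl R n W l (m - j)%R.
Proof. by apply/matrixP => m j; rewrite !mxE /= ord_subE. Qed.
End J.

Local Open Scope complex_scope.

Theorem corollary1 (R : realType) (N W : nat) (x : 'I_N -> R[i]) :
  (2 <= N)%N ->
  (N < W + W)%N -> (W < N)%N ->
  (forall j : nat, (W + W - N <= j)%N -> (j <= W)%N -> coprime N j) ->
  let g := @rect_window R N W in
  let Y := stft_mag2 g x in
  (forall l : 'I_N, LS_G g l \in unitmx) /\
  (forall (lam : R[i]) (u : 'cV[R[i]]_N),
      largest_eigenvalue (LS_X g Y) lam ->
      unit_eigenvector (LS_X g Y) lam u ->
      exists phi : R, forall n : 'I_N, sqrtC lam * u n ord0 = expi phi * x n).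
Proof.
case: N x => [|[|n]] x // _ h1 h2 hc g Y.
have HU : forall l : 'I_n.+2, LS_G g l \in unitmx.
  move=> l; rewrite /g LS_G_rect; apply: circ_unit => k; exact: chat_cl.
split => // lam u.
rewrite /Y LS_X_eq //.
exact: eig_part.
Qed.
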